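(* For every $n\ge1$, $m_{\mathsf{faithful}}\big(\mathrm{Aff}(\mathcal{O}/\mathfrak{p}^n)\big)=q^n-q^{n-1}$.
   Context: For a finite group $G$, $m_{\mathsf{faithful}}(G)$ denotes the smallest dimension of a faithful complex representation of $G$. $F$ is a non-Archimedean local field with ring of integers $\mathcal{O}$, maximal ideal $\mathfrak{p}$, and residue field of size $q$. For a commutative ring $R$, $\mathrm{Aff}(R)=R\rtimes R^\times$, where the unit group $R^\times$ acts on the additive group $(R,+)$ by multiplication. *)

(* Defs.v *)
From HB Require Import structures.
From mathcomp Require Import all_boot all_order all_algebra all_fingroup all_solvable all_field all_character.
Set Implicit Arguments. Unset Strict Implicit. Unset Printing Implicit Defensive.
Import Order.TTheory GRing.Theory Num.Theory.

(* Aff(R) = R ⋊ R^x, with R^x acting on (R,+) by multiplication: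
   (a,u) * (b,v) = (a + u b, u v). *)
Section Aff.
Variable R : finComUnitRingType.

Definition aff_type : Type := (R * {unit R})%type.
HB.instance Definition _ := Finite.on aff_type.

Local Open Scope ring_scope.

Definition aff_mul (x y : aff_type) : aff_type :=
  (x.1 + val x.2 * y.1, (x.2 * y.2)%g).
Definition aff_one : aff_type := (0, 1%g).
Definition aff_inv (x : aff_type) : aff_type :=
  (- (val (x.2^-1)%g * x.1), (x.2^-1)%g).

Lemma aff_mulA : associative aff_mul.
Proof.
move=> [a u] [b v] [c w]; rewrite /aff_mul /=; congr (_, _); last by rewrite mulgA.
by rewrite mulrDr addrA mulrA.
Qed.

Lemma aff_mul1 : left_id aff_one aff_mul.
Proof.
move=> [a u]; rewrite /aff_mul /aff_one /= mul1g; congr (_, _).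
by rewrite add0r; apply: mul1r.
Qed.

Lemma aff_mulV : left_inverse aff_one aff_inv aff_mul.
Proof.
move=> [a u]; rewrite /aff_mul /aff_inv /aff_one /=; congr (_, _); last by rewrite mulVg.
by rewrite addNr.
Qed.

HB.instance Definition _ := Finite_isGroup.Build aff_type aff_mulA aff_mul1 aff_mulV.
End Aff.

Definition Aff (R : finComUnitRingType) : {group aff_type R} := [set: aff_type R]%G.

(* G has a faithful complex representation of dimension d
   (complex numbers rendered as algC, the algebraic closure of Q in C). *)
Definition has_faithful_rep (gT : finGroupType) (G : {group gT}) (d : nat) : Prop :=
  exists rG : mx_representation algC G d, mx_faithful rG.

Definition m_faithful_is (gT : finGroupType) (G : {group gT}) (m : nat) : Prop :=
  has_faithful_rep G m /\ forall d, has_faithful_rep G d -> (m <= d)%N.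

(* Main.v *)
Require Import Defs.
From HB Require Import structures.
From mathcomp Require Import all_boot all_order all_algebra all_fingroup all_solvable all_field all_character.
Set Implicit Arguments. Unset Strict Implicit. Unset Printing Implicit Defensive.
From mathcomp Require Import ring.
Import Order.TTheory GRing.Theory Num.Theory.
Local Open Scope ring_scope.

Section AffGen.
Variable R : finComUnitRingType.
Local Notation A := (aff_type R).

Lemma affM (x y : A) : (x * y)%g = (x.1 + val x.2 * y.1, (x.2 * y.2)%g).
Proof. by []. Qed.
Lemma aff1 : (1%g : A) = (0, 1%g).
Proof. by []. Qed.
Lemma affV (x : A) : (x^-1)%g = (- (val (x.2^-1)%g * x.1), (x.2^-1)%g).
Proof. by []. Qed.

Definition Nset : {set A} := [set x : A | x.2 == 1%g].
Lemma Nset_group : group_set Nset.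
Proof.
apply/group_setP; split; first by rewrite inE.
move=> x y; rewrite !inE affM /= => /eqP-> /eqP->; by rewrite mulg1.
Qed.
Canonical NG := Group Nset_group.

Definition nelt (a : R) : A := (a, 1%g).
Lemma nelt_in a : nelt a \in NG.
Proof. by rewrite inE. Qed.
Lemma neltM a b : (nelt a * nelt b)%g = nelt (a + b).
Proof. by rewrite affM /nelt /= mul1r mulg1. Qed.
Lemma nelt1 : nelt 0 = 1%g. Proof. by []. Qed.
Lemma nelt_inj : injective nelt.
Proof. by move=> a b [->]. Qed.
Lemma NG_nelt x : x \in NG -> x = nelt x.1.
Proof. by rewrite inE; case: x => a u /= /eqP->. Qed.

Definition uelt (u : {unit R}) : A := (0, u).
Lemma nelt_conj (u : {unit R}) b : (nelt b ^ (uelt u)^-1)%g = nelt (val u * b).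
Proof.
rewrite /conjg invgK !affV !affM /= /nelt; congr (_, _).
  by rewrite mulr0 oppr0 !mul1r add0r addr0.
by rewrite mul1g mulgV.
Qed.

Lemma NG_abelian : abelian NG.
Proof.
apply/centsP=> x Nx y Ny; rewrite (NG_nelt Nx) (NG_nelt Ny).
by rewrite /commute !neltM addrC.
Qed.

Lemma NG_normal : (NG <| Aff R)%g.
Proof.
rewrite /normal subsetT /=; apply/normsP => g _; apply/setP=> x.
rewrite mem_conjg !inE /conjg invgK !affM /=.
by have := conjg_eq1 x.2 (g.2^-1); rewrite /conjg invgK.
Qed.

End AffGen.

Section Psi.
Variable R : finComUnitRingType.
Variable z : R.
Hypothesis zdiv : forall a : R, a != 0 -> exists c, z = a * c.
Variable psi : R -> algC.
Hypothesis psiD : forall a b, psi (a + b) = psi a * psi b.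
Hypothesis psi0 : psi 0 = 1.
Hypothesis psiz : psi z != 1.

Lemma psi_neq0 a : psi a != 0.
Proof.
apply/negP => /eqP pa; move: (psiD a (- a)); rewrite subrr psi0 pa mul0r.
by move/eqP; rewrite oner_eq0.
Qed.

Lemma psi_ann a : (forall b, psi (a * b) = 1) -> a = 0.
Proof.
move=> H; apply/eqP; apply: contraNT psiz => /zdiv [c ->]; by rewrite H.
Qed.

Lemma psi_inj_scale u w : (forall b, psi (u * b) = psi (w * b)) -> u = w.
Proof.
move=> H; apply/eqP; rewrite -subr_eq0; apply/eqP/psi_ann => b.
have := H b; rewrite -{1}(subrK w u) mulrDl psiD mulrC => /eqP.
rewrite -{2}(mulr1 (psi (w * b))) => /eqP.
by move/(mulfI (psi_neq0 _)).
Qed.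

Hypothesis loc : forall r : R, r \is a GRing.unit \/ (r - 1) \is a GRing.unit.

Lemma psi_ann_unit a : (forall w : {unit R}, psi (val w * a) = 1) -> a = 0.
Proof.
move=> H; apply: psi_ann => b; case: (loc b) => Hb.
  by rewrite mulrC (H (FinRing.Unit Hb)).
rewrite -(subrK 1 b) mulrDr mulr1 psiD [a * (b - 1)]mulrC (H (FinRing.Unit Hb)).
by rewrite -{1}(mul1r a) (H 1%g) mulr1.
Qed.

End Psi.

Section Bounds.
Variable R : finComUnitRingType.
Variable z : R.
Hypothesis z_neq0 : z != 0.
Hypothesis zdiv : forall a : R, a != 0 -> exists c, z = a * c.

Local Notation N := (NG R).

Lemma nelt_z_notin1 : nelt z \notin [1 aff_type R]%g.
Proof. by rewrite inE -nelt1 (inj_eq (@nelt_inj R)). Qed.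

Lemma constt_z (phi : 'CF(N)) : phi \is a character -> nelt z \notin cfker phi ->
  exists2 i, i \in irr_constt phi & 'chi_i (nelt z) != 1.
Proof.
move=> Nphi zN.
have [i Ci zi] : exists2 i, i \in irr_constt phi & nelt z \notin cfker 'chi_i.
  have /exists_inP [i Ci zi] : [exists (i | i \in irr_constt phi), nelt z \notin cfker 'chi_i].
    apply: contraR zN => /exists_inPn H; rewrite cfkerE // inE nelt_in /=.
    by apply/bigcapP => j Cj; exact: negbNE (H j Cj).
  by exists i.
exists i => //; move: zi; rewrite cfkerEirr inE.
have /char_abelianP lin := NG_abelian R.
by rewrite lin_char1.
Qed.

Section Lin.
Variable i : Iirr N.
Hypothesis chiz : 'chi_i (nelt z) != 1.
Let lin : 'chi_i \is a linear_char. Proof. exact: (char_abelianP _ (NG_abelian R)). Qed.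
Definition psiL (a : R) := 'chi_i (nelt a).
Lemma psiL_D a b : psiL (a + b) = psiL a * psiL b.
Proof. by rewrite /psiL -neltM lin_charM // nelt_in. Qed.
Lemma psiL_0 : psiL 0 = 1.
Proof. by rewrite /psiL nelt1 lin_char1. Qed.
End Lin.

Lemma lower_bound d (rG : mx_representation algC (Aff R) d) :
  mx_faithful rG -> (#|[set: {unit R}]| <= d)%N.
Proof.
move=> ffG.
have sNG : (N \subset Aff R)%g := subsetT _.
pose phi := cfRepr (subg_repr rG sNG).
have Nphi : phi \is a character := cfRepr_char _.
have zN : nelt z \notin cfker phi.
  rewrite cfker_repr; apply: contra nelt_z_notin1; apply/subsetP.
  exact: subg_mx_faithful.
have [i Ci chiz] := constt_z Nphi zN.
case/andP: (NG_normal R) => _ nN.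
have nU (u : {unit R}) : uelt u \in 'N(N)%g := subsetP nN _ (in_setT _).
pose j u := conjg_Iirr i (uelt u).
have chij u b : 'chi_(j u) (nelt b) = psiL i (val u * b).
  by rewrite conjg_IirrE cfConjgE // nelt_conj.
have j_inj : injective j.
  move=> u w eq_uw; apply: val_inj.
  apply: (psi_inj_scale zdiv (psiL_D i) (psiL_0 i) chiz) => b.
  by rewrite -!chij eq_uw.
have mj u : '[phi, 'chi_(j u)] = '[phi, 'chi_i].
  rewrite conjg_IirrE -(cfConjg_iso (uelt u) phi 'chi_i); congr ('[_, _]).
  rewrite /phi cfRepr_sub (cfConjgRes (G := Aff R)) ?normal_refl ?NG_normal ?in_setT //.
  by rewrite cfConjg_id ?in_setT.
have m_ge1 : 1 <= '[phi, 'chi_i].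
  case/natrP: (Cnat_cfdot_char_irr i Nphi) => m Em.
  by move: Ci; rewrite inE Em pnatr_eq0 ler1n lt0n.
have lin l : 'chi_l \is a linear_char := char_abelianP _ (NG_abelian R) l.
have Ed : d%:R = \sum_l '[phi, 'chi_l].
  rewrite -(cfRepr1 (subg_repr rG sNG)) -/phi {1}[phi]cfun_sum_cfdot sum_cfunE.
  by apply: eq_bigr => l _; rewrite cfunE lin_char1 ?mulr1.
have : (#|[set: {unit R}]|)%:R <= \sum_l '[phi, 'chi_l] :> algC.
  rewrite (bigID (mem [set j u | u in [set: {unit R}]])) /=.
  apply: ler_wpDr.
    by apply: sumr_ge0 => l _; apply: natr_ge0; apply: Cnat_cfdot_char_irr.
  rewrite big_imset /=; last by move=> u w _ _; apply: j_inj.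
  rewrite (eq_bigr (fun _ => '[phi, 'chi_i])) => [|u _]; last exact: mj.
  rewrite sumr_const -[X in _ <= X]mulr_natr -[X in X <= _]mul1r.
  exact: (@ler_wpM2r _ _ (ler0n _ _) _ _ m_ge1).
by rewrite -Ed ler_nat.
Qed.

End Bounds.

Section Upper.
Variable R : finComUnitRingType.
Variable z : R.
Hypothesis z_neq0 : z != 0.
Hypothesis zdiv : forall a : R, a != 0 -> exists c, z = a * c.
Hypothesis loc : forall r : R, r \is a GRing.unit \/ (r - 1) \is a GRing.unit.
Local Notation N := (NG R).
Local Notation U := [set: {unit R}].
Local Notation d := #|U|.

Lemma upper_bound : has_faithful_rep (Aff R) d.
Proof.
have [i _ chiz] : exists2 i, i \in irr_constt (cfReg N) & 'chi_i (nelt z) != 1.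
  apply: constt_z; first exact: cfReg_char.
  apply: contra (nelt_z_notin1 z_neq0); apply/subsetP; exact: cfaithful_reg.
pose e (r : 'I_d) : {unit R} := enum_val r.
have e_inj : injective e := @enum_val_inj _ _.
pose rho (g : aff_type R) : 'M[algC]_d :=
  \matrix_(r, c) ((e c == (e r * g.2)%g)%:R * psiL i (val (e r) * g.1)).
have rhoR : mx_repr (Aff R) rho.
  split.
    apply/matrixP => r c; rewrite !mxE aff1 /= mulg1 mulr0 psiL_0 mulr1.
    by rewrite (inj_eq e_inj) eq_sym.
  move=> x y _ _; apply/matrixP => r c; rewrite !mxE.
  pose k0 : 'I_d := enum_rank_in (in_setT (e r * x.2)%g) (e r * x.2)%g.
  have ek0 : e k0 = (e r * x.2)%g by rewrite /e enum_rankK_in ?in_setT.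
  rewrite (bigD1 k0) //= big1 ?addr0 => [|k nk]; last first.
    rewrite !mxE; have [ek|nek] := eqVneq (e k) (e r * x.2)%g; last by rewrite !mul0r.
    by case/eqP: nk; apply: e_inj; rewrite ek ek0.
  rewrite !mxE ek0 eqxx mul1r -mulgA.
  by rewrite mulrCA; congr (_ * _); rewrite mulrDr psiL_D FinRing.val_unitM mulrA.
exists (MxRepresentation rhoR); apply/subsetP => g /rkerP [_ Hg].
have diag r : rho g r r = 1 by move: Hg => /= ->; rewrite mxE eqxx mulr1n.
have g2 : g.2 = 1%g.
  have := diag (enum_rank_in (in_setT 1%g) 1%g).
  rewrite mxE /e enum_rankK_in ?in_setT // mul1g.
  case: eqP => [-> //|_]; rewrite mul0r => /eqP; by rewrite eq_sym oner_eq0.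
have g1 : g.1 = 0.
  apply: (@psi_ann_unit R z zdiv (psiL i) (psiL_D i) chiz loc) => w.
  have := diag (enum_rank_in (in_setT w) w).
  by rewrite mxE /e enum_rankK_in ?in_setT // g2 mulg1 eqxx mul1r.
by rewrite inE; case: g {Hg diag} g1 g2 => a u /= -> ->.
Qed.
End Upper.

Section DVR.
Variables (O : idomainType) (pi : O).
Hypothesis pi_nonunit : pi \isn't a GRing.unit.
Hypothesis pi_neq0 : pi != 0.
Hypothesis dvr : forall x : O, x != 0 ->
           exists (u : O) (e : nat), u \is a GRing.unit /\ x = u * pi ^+ e.
Variables (k : finFieldType) (res : {rmorphism O -> k}).
Hypothesis res_surj : forall z : k, exists x : O, res x = z.
Hypothesis res_ker : forall x : O, res x = 0 <-> exists y : O, x = pi * y.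
Variable n : nat.
Hypothesis n_ge1 : (1 <= n)%N.
Variables (R : finComUnitRingType) (f : {rmorphism O -> R}).
Hypothesis f_surj : forall z : R, exists x : O, f x = z.
Hypothesis f_ker : forall x : O, f x = 0 <-> exists y : O, x = pi ^+ n * y.

Lemma pi_inv y : pi * y != 1.
Proof. by apply: contra pi_nonunit => /eqP H; apply/unitrPr; exists y. Qed.

Lemma piX_neq0 m : pi ^+ m != 0.
Proof. exact: expf_neq0. Qed.

Let En : n = n.-1.+1. Proof. by rewrite prednK. Qed.

Definition zR := f (pi ^+ n.-1).

Lemma zR_neq0 : zR != 0.
Proof.
apply/eqP => /f_ker [y]; rewrite {2}En exprS -mulrA mulrCA => /eqP.
rewrite -{1}(mulr1 (pi ^+ n.-1)) (inj_eq (mulfI (piX_neq0 _))) eq_sym.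
by move/eqP => H; move: (pi_inv y); rewrite H eqxx.
Qed.

Lemma zR_div a : a != 0 -> exists c, zR = a * c.
Proof.
move=> a0; have [x fx] := f_surj a.
have x0 : x != 0 by apply: contra a0 => /eqP x0; rewrite -fx x0 rmorph0.
have [u [e [Uu Ex]]] := dvr x0.
have le_en : (e <= n.-1)%N.
  rewrite leqNgt; apply: contra a0 => lt_ne.
  rewrite -fx; apply/eqP/f_ker; exists (u * pi ^+ (e - n)).
  by rewrite Ex mulrCA -exprD subnKC // En.
exists (f (u^-1 * pi ^+ (n.-1 - e))).
by rewrite -fx -rmorphM /zR Ex mulrACA divrr // mul1r -exprD subnKC.
Qed.

Lemma R_loc (r : R) : r \is a GRing.unit \/ (r - 1) \is a GRing.unit.
Proof.
have [x <-] := f_surj r.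
have [->|x0] := eqVneq x 0.
  by right; rewrite rmorph0 sub0r unitrN1.
have [u [e [Uu Ex]]] := dvr x0.
case: e Ex => [|e] Ex.
  by left; rewrite Ex expr0 mulr1 rmorph_unit.
right; rewrite -(rmorph1 f) -rmorphB; apply: rmorph_unit.
have x10 : x - 1 != 0.
  rewrite subr_eq0; apply/negP => /eqP x1.
  by move: (pi_inv (u * pi ^+ e)); rewrite mulrCA -exprS -Ex x1 eqxx.
have [u' [e' [Uu' Ex']]] := dvr x10.
case: e' Ex' => [|e'] Ex'; first by rewrite Ex' expr0 mulr1.
have : pi * (u * pi ^+ e - u' * pi ^+ e') = 1.
  by rewrite mulrBr mulrCA -exprS -Ex mulrCA -exprS -Ex' opprB addrC subrK.
by move/eqP; rewrite (negbTE (pi_inv _)).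
Qed.


Definition Iset (j : nat) : {set R} := [set x : R | [exists t, x == f pi ^+ j * t]].

Lemma IsetP j x : reflect (exists y, x = f (pi ^+ j * y)) (x \in Iset j).
Proof.
rewrite inE; apply: (iffP existsP) => [[t /eqP ->]|[y ->]].
  by have [y <-] := f_surj t; exists y; rewrite rmorphM rmorphXn.
by exists (f y); rewrite rmorphM rmorphXn.
Qed.

Lemma Iset_n : Iset n = [set 0].
Proof.
apply/setP => x; apply/IsetP/set1P => [[y ->]|->].
  by apply/f_ker; exists y.
by exists 0; rewrite mulr0 rmorph0.
Qed.

Lemma Iset_0 : Iset 0 = setT.
Proof.
apply/setP => x; rewrite in_setT; apply/IsetP.
by have [y <-] := f_surj x; exists y; rewrite expr0 mul1r.
Qed.

Let res_surj' c : exists x, res x == c.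
Proof. by have [x <-] := res_surj c; exists x. Qed.
Let s c := xchoose (res_surj' c).
Let resK c : res (s c) = c.
Proof. exact/eqP/(xchooseP (res_surj' c)). Qed.

Lemma card_Iset_step j : (j < n)%N -> #|Iset j| = (#|k| * #|Iset j.+1|)%N.
Proof.
move=> ltjn.
pose h (p : k * R) := f (pi ^+ j * s p.1) + p.2.
have -> : Iset j = h @: setX [set: k] (Iset j.+1).
  apply/setP => x; apply/IsetP/imsetP => [[y ->]|[[c t]]].
    have /res_ker [y' Ey'] : res (y - s (res y)) = 0 by rewrite rmorphB resK subrr.
    exists (res y, f (pi ^+ j.+1 * y')).
      by apply/setXP; split; [exact: in_setT | apply/IsetP; exists y'].
    rewrite /h /= -rmorphD; congr (f _).
    by rewrite exprSr -mulrA -mulrDr -Ey' addrC subrK.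
  case/setXP => _ /IsetP [y ->] ->.
  exists (s c + pi * y); rewrite /h /= -rmorphD; congr (f _).
  by rewrite mulrDr exprSr mulrA.
rewrite card_in_imset ?cardsX ?cardsT //.
move=> [c t] [c' t'] /setXP [_ /IsetP [y ->]] /setXP [_ /IsetP [y' ->]] /= E.
have Ec : c = c'.
  have : f (pi ^+ j * (s c - s c' - pi * (y' - y))) = 0.
    have -> : pi ^+ j * (s c - s c' - pi * (y' - y)) =
      (pi ^+ j * s c + pi ^+ j.+1 * y) - (pi ^+ j * s c' + pi ^+ j.+1 * y').
      by rewrite exprSr; ring.
    by move: E; rewrite /h /= rmorphB !rmorphD => ->; rewrite subrr.
  case/f_ker => w Ew.
  have Ew' : s c - s c' - pi * (y' - y) = pi ^+ (n - j) * w.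
    by apply: (mulfI (piX_neq0 j)); rewrite Ew mulrA -exprD subnKC // ltnW.
  have : res (s c - s c') = 0.
    apply/res_ker; exists ((y' - y) + pi ^+ (n - j).-1 * w).
    rewrite mulrDr mulrA -exprS prednK ?subn_gt0 // -Ew'.
    by rewrite [RHS]addrC subrK.
  by rewrite (rmorphB res) !resK => /eqP; rewrite subr_eq0 => /eqP.
by move: E; rewrite /h /= Ec => /addrI ->.
Qed.


Lemma card_Iset m : (m <= n)%N -> #|Iset (n - m)| = (#|k| ^ m)%N.
Proof.
elim: m => [|m IH] lemn; first by rewrite subn0 Iset_n cards1.
rewrite card_Iset_step; last by rewrite subnS prednK ?subn_gt0 // leq_subr.
by rewrite subnSK // IH ?(ltnW lemn) // expnS.
Qed.

Lemma unit_Iset (x : R) : (x \is a GRing.unit) = (x \notin Iset 1).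
Proof.
apply/idP/idP => [Ux|nI].
  apply/negP => /IsetP [y Ex]; move: Ux; rewrite Ex expr1 rmorphM unitrM.
  case/andP => /unitrPr [v Ev] _.
  have [y' Ey'] := f_surj v.
  have /f_ker [w Ew] : f (pi * y' - 1) = 0 by rewrite rmorphB rmorphM Ey' Ev rmorph1 subrr.
  move: (pi_inv (y' - pi ^+ n.-1 * w)); rewrite mulrBr mulrA -exprS -En -Ew.
  by rewrite opprB addrC subrK; case/negP.
have [y1 Ey] := f_surj x.
have [y0|y0] := eqVneq y1 0.
  by case/negP: nI; rewrite -Ey y0 rmorph0; apply/IsetP; exists 0; rewrite mulr0 rmorph0.
have [u [e [Uu Ex]]] := dvr y0.
case: e Ex => [|e] Ex; first by rewrite -Ey Ex expr0 mulr1 rmorph_unit.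
case/negP: nI; apply/IsetP; exists (u * pi ^+ e).
by rewrite -Ey Ex expr1 mulrCA -exprS.
Qed.

Lemma card_units : #|[set: {unit R}]| = (#|k| ^ n - #|k| ^ n.-1)%N.
Proof.
have e1 : (n - n.-1 = 1)%N by rewrite {1}En subSnn.
have E1 : #|Iset 1| = (#|k| ^ n.-1)%N by rewrite -e1 card_Iset // leq_pred.
have E0 : #|R| = (#|k| ^ n)%N by rewrite -cardsT -Iset_0 -(subnn n) card_Iset.
rewrite cardsT card_sub -E0 -E1 [in RHS](cardsCs (Iset 1)) subKn; last first.
  by rewrite -cardsT subset_leq_card // subsetT.
by apply: eq_card => x; rewrite inE unit_Iset !inE.
Qed.

End DVR.

Theorem theorem1p5
  (O : idomainType) (pi : O)
  (pi_nonunit : pi \isn't a GRing.unit) (pi_neq0 : pi != 0)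
  (dvr : forall x : O, x != 0 ->
           exists (u : O) (e : nat), u \is a GRing.unit /\ x = u * pi ^+ e)
  (k : finFieldType) (res : {rmorphism O -> k})
  (res_surj : forall z : k, exists x : O, res x = z)
  (res_ker : forall x : O, res x = 0 <-> exists y : O, x = pi * y)
  (n : nat) (n_ge1 : (1 <= n)%N)
  (R : finComUnitRingType) (f : {rmorphism O -> R})
  (f_surj : forall z : R, exists x : O, f x = z)
  (f_ker : forall x : O, f x = 0 <-> exists y : O, x = pi ^+ n * y) :
  m_faithful_is (Aff R) (#|k| ^ n - #|k| ^ n.-1)%N.
Proof.
rewrite -(card_units pi_nonunit pi_neq0 dvr res_surj res_ker n_ge1 f_surj f_ker).
have z0 := zR_neq0 pi_nonunit pi_neq0 n_ge1 f_ker.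
have zd := zR_div dvr n_ge1 f_surj f_ker.
split; first exact: (upper_bound z0 zd (R_loc pi_nonunit dvr f_surj)).
by move=> d [rG ffG]; apply: (lower_bound z0 zd ffG).
Qed.
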